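(* Let $\lambda\in(0,\tfrac12)$ and let $G$ be a finite simple connected graph with $n$ vertices. Then $$mt^{e}_{\lambda}(G)\le (n-1)\lambda,$$ and equality holds when $G$ is the complete graph $K_n$ (at any of its vertices).
   Context: $d(u,v)$ denotes graph distance. For a vertex $u$ of $G=(V,E)$, $t^{e}_{\lambda}(u)=\sum_{v\in V\setminus\{u\}} d(u,v)\lambda^{d(u,v)}$, and $mt^{e}_{\lambda}(G)=\min\{t^{e}_{\lambda}(u):u\in V\}$. *)

(* Defs.v *)
From HB Require Import structures.
From mathcomp Require Import all_boot all_order all_algebra.
Set Implicit Arguments. Unset Strict Implicit. Unset Printing Implicit Defensive.
Import Order.TTheory GRing.Theory Num.Theory.

Definition simple_graph (T : finType) (e : rel T) : Prop :=
  symmetric e /\ irreflexive e.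

Definition connected_graph (T : finType) (e : rel T) : Prop :=
  forall u v : T, connect e u v.

Definition complete_graph (T : finType) (e : rel T) : Prop :=
  forall u v : T, u != v -> e u v.

Definition walk_of_len (T : finType) (e : rel T) (u v : T) (k : nat) : bool :=
  [exists p : k.-tuple T, path e u p && (last u p == v)].

(* graph distance d(u,v): the least length of a walk from u to v
   (searched among 0..#|T|-1, which suffices for connected graphs). *)
Definition gdist (T : finType) (e : rel T) (u v : T) : nat :=
  find (walk_of_len e u v) (iota 0 #|T|).

Local Open Scope ring_scope.

Definition te (R : realFieldType) (T : finType) (e : rel T) (lam : R) (u : T) : R :=
  \sum_(v : T | v != u) (gdist e u v)%:R * lam ^+ (gdist e u v).

(* mt^e_lambda(G) = min_u t^e_lambda(u); u0 is any vertex (used only as seed). *)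
Definition mte (R : realFieldType) (T : finType) (e : rel T) (lam : R) (u0 : T) : R :=
  \big[Order.min/te e lam u0]_(u : T) te e lam u.

(* Main.v *)
Require Import Defs.
From mathcomp Require Import all_boot all_order all_algebra.
From mathcomp Require Import lra.
Import Order.TTheory GRing.Theory Num.Theory.
Local Open Scope ring_scope.

Lemma klam_le (R : realFieldType) (lam : R) (k : nat) :
  0 < lam -> lam < 1 / 2 -> k%:R * lam ^+ k <= lam.
Proof.
move=> l0 l2.
have step : forall k : nat, (0 < k)%N -> k.+1%:R * lam ^+ k.+1 <= k%:R * lam ^+ k.
  move=> j j0.
  have hj : 1 <= j%:R :> R by rewrite ler1n.
  have key : j.+1%:R * lam <= j%:R.
    rewrite -natr1; set y := j%:R in hj *; nra.
  rewrite exprS mulrA [_ * lam]mulrC -mulrA.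
  rewrite mulrA [lam * _]mulrC.
  by apply: ler_wpM2r; first by rewrite exprn_ge0 // ltW.
elim: k => [|k IH]; first by rewrite mul0r ltW.
case: k IH => [|k] IH; first by rewrite mul1r expr1.
exact: le_trans (step k.+1 isT) IH.
Qed.

Lemma te_le (R : realFieldType) (T : finType) (e : rel T) (lam : R) (u : T) :
  0 < lam -> lam < 1 / 2 -> te e lam u <= (#|T| - 1)%:R * lam.
Proof.
move=> l0 l2; rewrite /te.
apply: le_trans (_ : \sum_(v : T | v != u) lam <= _).
  by apply: ler_sum => v _; apply: klam_le.
by rewrite sumr_const cardC1 subn1 mulr_natl.
Qed.

Lemma gdist_complete (T : finType) (e : rel T) (u v : T) :
  complete_graph e -> u != v -> gdist e u v = 1%N.
Proof.
move=> hc uv; rewrite /gdist.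
have h2 : (1 < #|T|)%N.
  rewrite (cardD1 u) (cardD1 v) !inE eq_sym uv /=; by [].
case: #|T| h2 => [|[|n]] // _.
rewrite /= /walk_of_len.
have -> : [exists p : 0.-tuple T, path e u p && (last u p == v)] = false.
  apply/negbTE/existsPn => p; by rewrite tuple0 /= (negbTE uv).
have -> : [exists p : 1.-tuple T, path e u p && (last u p == v)] = true.
  apply/existsP; exists [tuple v]; by rewrite /= hc // eqxx.
by [].
Qed.

Theorem theorem4 (R : realFieldType) (T : finType) (e : rel T) (lam : R) (u0 : T) :
  simple_graph e -> connected_graph e -> 0 < lam -> lam < 1 / 2 ->
  mte e lam u0 <= (#|T| - 1)%:R * lam /\
  (complete_graph e ->
     mte e lam u0 = (#|T| - 1)%:R * lam /\
     forall u : T, te e lam u = (#|T| - 1)%:R * lam).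
Proof.
move=> _ _ l0 l2; split.
  rewrite /mte; apply: (le_trans (bigmin_le_id _ _ _ _)); exact: te_le.
move=> hc.
have hte : forall u : T, te e lam u = (#|T| - 1)%:R * lam.
  move=> u; rewrite /te (eq_bigr (fun _ => lam)).
    by rewrite sumr_const cardC1 subn1 mulr_natl.
  by move=> v vu; rewrite gdist_complete // 1?eq_sym // mul1r expr1.
split=> //; rewrite /mte.
rewrite (eq_bigr (fun _ => te e lam u0)); last by move=> i _; rewrite !hte.
rewrite bigmin_eq_id ?hte //.
Qed.
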